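(* Let $G$ be a finite bipartite graph with vertex classes $A$ and $B$, and let $\lambda\geq 1$ be a real number. Then at least one of the following holds: (1) there is a vertex $v\in B$ and sets $A'\subseteq N(v)$ and $B'\subseteq B\setminus\{v\}$ such that $d(G[A',B'])\geq \lambda$; (2) there is a spanning subgraph $H\subseteq G$ with $d(H)\geq d(G)/(\lambda+1)$ and $d_H(x,y)\leq \lambda$ for all distinct $x,y\in B$.
   Context: $N(v)$ is the neighbourhood of $v$ in $G$. For disjoint vertex sets $A',B'$, $G[A',B']$ is the bipartite subgraph of $G$ with vertex set $A'\cup B'$ consisting of all edges of $G$ between $A'$ and $B'$. $d(\cdot)$ denotes average degree, $d(F)=2e(F)/|V(F)|$. For vertices $x,y$, the codegree $d_H(x,y)$ is the number of common neighbours of $x$ and $y$ in $H$. A spanning subgraph has the same vertex set as $G$. *)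

(* Defs.v *)
From HB Require Import structures.
From mathcomp Require Import all_boot all_order all_algebra.
From mathcomp Require Import reals.
Set Implicit Arguments. Unset Strict Implicit. Unset Printing Implicit Defensive.
Import Order.TTheory GRing.Theory Num.Theory.
Local Open Scope ring_scope.

(* A finite bipartite graph with vertex classes A and B (finite types, the
   vertex set is the disjoint union A + B) is given by its edge set
   G : {set A * B}; the edge {a,b} is the pair (a,b). *)

Section Bip.
Variables (A B : finType).

Definition nbhB (G : {set A * B}) (v : B) : {set A} := [set a | (a, v) \in G].

Definition bip_edges (G : {set A * B}) (A' : {set A}) (B' : {set B})
  : {set A * B} := [set p in G | (p.1 \in A') && (p.2 \in B')].

(* average degree 2 e(F) / |V(F)| (0 if F has no vertices) *)
Definition avgdeg {R : realType} (e v : nat) : R := (2 * e)%:R / v%:R.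

Definition d_induced {R : realType} (G : {set A * B}) (A' : {set A})
  (B' : {set B}) : R := avgdeg #|bip_edges G A' B'| (#|A'| + #|B'|).

Definition d_graph {R : realType} (H : {set A * B}) : R :=
  avgdeg #|H| (#|A| + #|B|).

Definition codeg (H : {set A * B}) (x y : B) : nat :=
  #|[set a | ((a, x) \in H) && ((a, y) \in H)]|.

End Bip.

(* Main.v *)
Require Import Defs.
From HB Require Import structures.
From mathcomp Require Import all_boot all_order all_algebra.
From mathcomp Require Import reals.
From mathcomp Require Import lra ring.
Import Order.TTheory GRing.Theory Num.Theory.
Local Open Scope ring_scope.


Lemma inv_anti (R : realFieldType) (m n : nat) : (m <= n)%N ->
  1 / (n%:R + 1) <= 1 / (m%:R + 1 : R).
Proof.
move=> mn; rewrite !div1r lef_pV2 ?posrE ?ltr_wpDl ?ler0n //.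
by rewrite lerD2r ler_nat.
Qed.

Definition degS {T : finType} (r : rel T) (S : {set T}) (u : T) :=
  #|[set y | (y \in S) && r u y]|.

Lemma caro_wei (R : realFieldType) (T : finType) (r : rel T)
  (rsym : forall x y, r x y = r y x) (rirr : forall x, ~~ r x x) :
  forall S : {set T}, exists I : {set T},
   [/\ I \subset S, (forall x y, x \in I -> y \in I -> ~~ r x y) &
     \sum_(u in S) 1 / ((degS r S u)%:R + 1) <= (#|I|)%:R :> R].
Proof.
move=> S; have [n] := ubnP #|S|; elim: n S => [|n IH] S.
  by rewrite ltn0.
rewrite ltnS => hS.
have [S0|[v0 v0S]] := set_0Vmem S.
  exists set0; split; [by rewrite sub0set| by move=> x y; rewrite inE|].
  by rewrite S0 big_set0 cards0.
case: (@arg_minnP _ v0 (fun x => x \in S) (degS r S) v0S) => v vS vmin.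
set D := [set y | (y \in S) && r v y].
set S' := S :\: (v |: D).
have vS' : v \notin S' by rewrite !inE eqxx.
have S'S : S' \subset S by apply: subsetDl.
have ltS : (#|S'| < #|S|)%N by apply: proper_card; apply/properP; split => //; exists v.
have [I' [I'S' I'ind I'sum]] := IH S' (leq_trans ltS hS).
exists (v |: I'); split.
- by rewrite subUset sub1set vS (subset_trans I'S' S'S).
- have key : forall y, y \in I' -> ~~ r v y.
    move=> y /(subsetP I'S'); rewrite !inE negb_or => /andP[/andP[_ ]].
    by move=> H yS; apply: contra H => ->; rewrite yS.
  move=> x y; rewrite !inE => /orP[/eqP->|xI] /orP[/eqP->|yI].
  + exact: rirr.
  + exact: key.
  + by rewrite rsym; apply: key.
  + exact: I'ind.
- have vI' : v \notin I' by apply: contra vS' => /(subsetP I'S').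
  rewrite cardsU1 vI' /= natrD.
  rewrite (big_setID (v |: D)) /=.
  have -> : S :&: (v |: D) = v |: D.
    apply/setIidPr; rewrite subUset sub1set vS /=.
    by apply/subsetP => y; rewrite inE => /andP[].
  apply: lerD.
  + apply: (@le_trans _ _ (\sum_(u in v |: D) 1 / ((degS r S v)%:R + 1))).
      apply: ler_sum => u uD; apply: inv_anti; apply: vmin.
      move: uD; rewrite !inE => /orP[/eqP->//|/andP[]//].
    rewrite sumr_const cardsU1.
    have -> : v \notin D by rewrite inE (negbTE (rirr v)) andbF.
    rewrite /= add1n -/(degS r S v).
    rewrite div1r -(mulr_natr _ (degS r S v).+1) -natr1 mulVf //.
    by rewrite lt0r_neq0 // ltr_wpDl ?ler0n.
  + apply: le_trans I'sum; apply: ler_sum => u _; apply: inv_anti.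
    apply: subset_leq_card; apply/subsetP => y; rewrite !inE.
    by case/andP => /andP[_ ->] ->.
Qed.


Lemma tangent (R : realFieldType) (l t : R) : 0 <= l -> 0 <= t ->
  (2 * l + 1-t)/((l+1)^+2) <= 1/(t+1).
Proof.
move=> l0 t0; rewrite -subr_ge0.
have t1 : t + 1 != 0 by rewrite lt0r_neq0 // ltr_wpDl.
have l1 : l + 1 != 0 by rewrite lt0r_neq0 // ltr_wpDl.
have -> : 1/(t+1) - (2 * l + 1-t)/((l+1)^+2) = (l-t)^+2/((t+1)*(l+1)^+2).
  by field; rewrite t1 l1.
apply: divr_ge0; first exact: sqr_ge0.
by apply: mulr_ge0; [rewrite addr_ge0 | apply: sqr_ge0].
Qed.

Lemma sum_bound (R : realFieldType) (I : finType) (N : {set I}) (t : I -> nat)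
  (l : R) : 0 <= l -> (\sum_(a in N) t a)%:R <= l * #|N|%:R ->
  #|N|%:R / (l+1) <= \sum_(a in N) 1/((t a)%:R + 1).
Proof.
move=> l0 h.
apply: (@le_trans _ _ (\sum_(a in N) (2 * l + 1-(t a)%:R)/((l+1)^+2))); last first.
  by apply: ler_sum => a _; apply: tangent => //; exact: ler0n.
rewrite -mulr_suml sumrB sumr_const -natr_sum.
have l1 : l + 1 != 0 by rewrite lt0r_neq0 // ltr_wpDl.
have -> : #|N|%:R / (l+1) = (#|N|%:R * (l+1)) / ((l+1)^+2) by field.
apply: ler_wpM2r; first by rewrite invr_ge0 sqr_ge0.
rewrite -mulr_natr. nra.
Qed.


Section Count.
Variables (A B : finType).

Lemma card_dbl (S : {set A * B}) :
  #|S| = (\sum_(a : A) \sum_(b : B) ((a, b) \in S : nat))%N.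
Proof.
rewrite pair_big /= -sum1_card big_mkcond /=.
by apply: eq_bigr => -[a b] _ /=; case: ((a, b) \in S).
Qed.

Lemma card_pairs1 (S : {set A * B}) :
  #|S| = (\sum_(a : A) #|[set b | (a, b) \in S]|)%N.
Proof.
rewrite card_dbl; apply: eq_bigr => a _.
rewrite -sum1_card [RHS]big_mkcond /=; apply: eq_bigr => b _.
by rewrite inE; case: ((a, b) \in S).
Qed.

Lemma card_pairs2 (S : {set A * B}) :
  #|S| = (\sum_(b : B) #|[set a | (a, b) \in S]|)%N.
Proof.
rewrite card_dbl exchange_big; apply: eq_bigr => b _.
rewrite -sum1_card [RHS]big_mkcond /=; apply: eq_bigr => a _.
by rewrite inE; case: ((a, b) \in S).
Qed.
End Count.

Section Main.
Variables (R : realType) (A B : finType) (G : {set A * B}) (lambda : R).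
Hypothesis hlambda : 1 <= lambda.

Definition bad (x y : B) : bool := (x != y) && (lambda < (codeg G x y)%:R).
Definition tt_ (a : A) (v : B) : nat := #|[set y | ((a, y) \in G) && bad v y]|.
Definition EE (v : B) : nat := (\sum_(a in nbhB G v) tt_ a v)%N.
Definition YY (v : B) : {set B} := [set y | bad v y].

Lemma codegC x y : codeg G x y = codeg G y x.
Proof. by apply: eq_card => a; rewrite !inE andbC. Qed.

Lemma badC x y : bad x y = bad y x.
Proof. by rewrite /bad eq_sym codegC. Qed.

Lemma bad_irr x : ~~ bad x x.
Proof. by rewrite /bad eqxx. Qed.

Lemma EE_bip v : #|bip_edges G (nbhB G v) (YY v)| = EE v.
Proof.
rewrite card_pairs1 /EE [RHS]big_mkcond /=; apply: eq_bigr => a _.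
case: ifP => aN.
  by apply: eq_card => y; move: aN; rewrite !inE /= => ->.
rewrite (_ : [set _ | _] = set0) ?cards0 //; apply/setP => y.
by move: aN; rewrite !inE /= => ->; rewrite andbF.
Qed.

Lemma bip_codeg v :
  #|bip_edges G (nbhB G v) (YY v)| = (\sum_(y in YY v) codeg G v y)%N.
Proof.
rewrite card_pairs2 [RHS]big_mkcond /=; apply: eq_bigr => y _.
case: ifP => yY.
  by apply: eq_card => a; move: yY; rewrite !inE /= => ->; rewrite andbT andbC.
rewrite (_ : [set _ | _] = set0) ?cards0 //; apply/setP => a.
by move: yY; rewrite !inE /= => ->; rewrite !andbF.
Qed.

Lemma case1 v : lambda * (#|nbhB G v|)%:R < (EE v)%:R ->
  lambda <= d_induced G (nbhB G v) (YY v).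
Proof.
move=> h.
have hY : lambda * (#|YY v|)%:R <= (EE v)%:R.
  rewrite -EE_bip bip_codeg natr_sum mulr_natr -sumr_const.
  apply: ler_sum => y; rewrite inE => /andP[_ /ltW] //.
have pos : (0 < #|nbhB G v| + #|YY v|)%N.
  rewrite lt0n; apply/negP => /eqP /eqP; rewrite addn_eq0 => /andP[/eqP d0 /eqP y0].
  move: h; rewrite -EE_bip bip_codeg (cards0_eq y0) big_set0 d0 mulr0.
  by rewrite ltxx.
rewrite /d_induced /avgdeg EE_bip ler_pdivlMr ?ltr0n // natrM natrD mulrDr.
have l0 : 0 <= lambda by apply: le_trans hlambda.
lra.
Qed.

Lemma case2 : (forall v, (EE v)%:R <= lambda * (#|nbhB G v|)%:R) ->
  exists H : {set A * B},
      [/\ H \subset G,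
          d_graph G / (lambda + 1) <= d_graph H &
          forall x y : B, x != y -> (codeg H x y)%:R <= lambda].
Proof.
move=> hE.
have l0 : 0 <= lambda by apply: le_trans hlambda.
pose SS (a : A) : {set B} := [set y | (a, y) \in G].
have hcw : forall a : A, exists I : {set B},
   [/\ I \subset SS a, (forall x y, x \in I -> y \in I -> ~~ bad x y) &
     \sum_(u in SS a) 1 / ((degS bad (SS a) u)%:R + 1) <= (#|I|)%:R :> R].
  by move=> a; apply: caro_wei; [exact: badC | exact: bad_irr].
have [f hf] := fin_all_exists hcw.
pose H := [set p : A * B | (p \in G) && (p.2 \in f p.1)].
exists H; split.
- by apply/subsetP => p; rewrite inE => /andP[].
- have hH : (#|H|)%:R = \sum_a (#|f a|)%:R :> R.
    rewrite card_pairs1 natr_sum; apply: eq_bigr => a _; congr (_%:R).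
    apply: eq_card => b; rewrite !inE /=.
    have [fS _ _] := hf a.
    by case bf: (b \in f a); rewrite ?andbF ?andbT //; move/subsetP: fS => /(_ _ bf); rewrite inE.
  have hG : (#|G|)%:R / (lambda + 1) <= (#|H|)%:R :> R.
    rewrite hH.
    apply: (@le_trans _ _ (\sum_a \sum_(u in SS a) 1 / ((tt_ a u)%:R + 1))); last first.
      apply: ler_sum => a _; have [_ _ hs] := hf a; apply: le_trans hs.
      rewrite le_eqVlt; apply/orP; left; apply/eqP; apply: eq_bigr => u _; congr (1 / (_%:R + 1)).
      by apply: eq_card => y; rewrite !inE.
    have -> : \sum_a \sum_(u in SS a) 1 / ((tt_ a u)%:R + 1) =
              \sum_u \sum_(a in nbhB G u) 1 / ((tt_ a u)%:R + 1) :> R.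
      rewrite (eq_bigr (fun a => \sum_u (if (a, u) \in G then 1 / ((tt_ a u)%:R + 1) else 0))); last first.
        by move=> a _; rewrite big_mkcond; apply: eq_bigr => u _; rewrite inE.
      rewrite exchange_big; apply: eq_bigr => u _; rewrite [RHS]big_mkcond.
      by apply: eq_bigr => a _; rewrite /nbhB inE.
    rewrite card_pairs2 natr_sum mulr_suml; apply: ler_sum => u _.
    by apply: sum_bound => //; exact: (hE u).
  rewrite /d_graph /avgdeg !natrM.
  have -> : 2 * (#|G|)%:R / (#|A| + #|B|)%:R / (lambda + 1) = 2 * ((#|G|)%:R / (lambda + 1)) / (#|A| + #|B|)%:R :> R.
    by rewrite -!mulrA [(lambda + 1)^-1 * _]mulrC.
  apply: ler_wpM2r; first by rewrite invr_ge0 ler0n.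
  by apply: ler_wpM2l; [rewrite ler0n | exact: hG].
- move=> x y xy.
  case bxy: (bad x y).
    rewrite (_ : codeg H x y = 0%N) ?ler0n //.
    apply/eqP; rewrite cards_eq0; apply/eqP/setP => a; rewrite !inE /=.
    apply/negP => /andP[/andP[_ xa] /andP[_ ya]].
    have [_ hind _] := hf a.
    by move: (hind _ _ xa ya); rewrite bxy.
  apply: (@le_trans _ _ (codeg G x y)%:R).
    rewrite ler_nat; apply: subset_leq_card; apply/subsetP => a.
    by rewrite !inE /= => /andP[/andP[-> _] /andP[-> _]].
  by move: bxy; rewrite /bad xy /= => /negbT; rewrite -leNgt.
Qed.
End Main.


Theorem lemma5 (R : realType) (A B : finType) (G : {set A * B})
  (lambda : R) (hlambda : 1 <= lambda) :
  (exists (v : B) (A' : {set A}) (B' : {set B}),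
      [/\ A' \subset nbhB G v, B' \subset [set~ v] &
          lambda <= d_induced G A' B'])
  \/
  (exists H : {set A * B},
      [/\ H \subset G,
          d_graph G / (lambda + 1) <= d_graph H &
          forall x y : B, x != y -> (codeg H x y)%:R <= lambda]).
Proof.
case: (boolP [exists v, lambda * (#|nbhB G v|)%:R < (@EE R A B G lambda v)%:R]).
  case/existsP => v hv; left; exists v, (nbhB G v), (@YY R A B G lambda v); split.
  - exact: subxx.
  - by apply/subsetP => y; rewrite !inE => /andP[]; rewrite eq_sym.
  - exact: case1.
move=> hn; right; apply: case2 => // v.
rewrite negb_exists in hn.
by move/forallP: hn => /(_ v); rewrite -leNgt.
Qed.
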